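(* Let $n\ge2$, $v\in V(\mathbb{T}_n^2)\setminus\{\mathbf 0\}$, $h(x)=\log(1+x)/\sqrt{\log(1+\|v\|_1)}$ for $x\ge0$, and define $\eta:V(\mathbb{T}_n^2)\to[0,\infty)$ by $\eta(w)=0$ if $\|w\|_1\le\sqrt{\|v\|_1}$, $\eta(w)=h(\|w\|_1)-h(\sqrt{\|v\|_1})$ if $\sqrt{\|v\|_1}\le\|w\|_1\le\|v\|_1$, and $\eta(w)=h(\|v\|_1)-h(\sqrt{\|v\|_1})$ if $\|w\|_1\ge\|v\|_1$. Let $\eta'(w,k)=\max\{\eta(w)-\eta(u):u\in V(\mathbb{T}_n^2),\ d(w,u)\le k\}$ with $d$ the graph distance in $\mathbb{T}_n^2$. Then there is an absolute constant $C>0$ (independent of $n$ and $v$) such that $$\sum_{w\in V(\mathbb{T}_n^2)}\sum_{k=0}^\infty2^{-k}\eta'(w,k+1)^2\le C,$$ and for every $\alpha>0$ and $0<\varepsilon\le 1/2$, $$L(\alpha\eta,\varepsilon)\ge\Big\lfloor(1+\sqrt{\|v\|_1})\Big(\exp\Big(\frac{\varepsilon\sqrt{\log(1+\|v\|_1)}}{2\alpha}\Big)-1\Big)\Big\rfloor-1.$$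
   Context: $\mathbb{T}_n^2$ is the discrete torus with vertex set $\{-n+1,\dots,n\}^2$, adjacent if equal in one coordinate and differing by $1$ mod $2n$ in the other; $\mathbf 0=(0,0)$, $\|(w_1,w_2)\|_1=|w_1|+|w_2|$. For $\tau:V\to[0,\infty)$ on a finite connected graph with distance $d$: $\tau'(w,k)=\max\{\tau(w)-\tau(u):d(w,u)\le k\}$ and $L(\tau,\varepsilon)=\sup\{k\ge0 \text{ integer}:\tau'(w,k)\le\varepsilon/2\ \forall w\}-1$. *)

(* Defs.v *)
From Stdlib Require Import Reals ZArith List.
Import ListNotations.
Open Scope R_scope.

(* Vertices of the torus T_n^2 : pairs of integers in {-n+1,...,n}^2. *)
Definition vtx := (Z * Z)%type.

Definition in_range (n : nat) (a : Z) : Prop :=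
  (- Z.of_nat n + 1 <= a <= Z.of_nat n)%Z.

Definition in_torus (n : nat) (w : vtx) : Prop :=
  in_range n (fst w) /\ in_range n (snd w).

Definition zrange (n : nat) : list Z :=
  map (fun i => (- Z.of_nat n + 1 + Z.of_nat i)%Z) (seq 0 (2 * n)).

Definition vertices (n : nat) : list vtx := list_prod (zrange n) (zrange n).

Definition zsucc (n : nat) (a : Z) : Z :=
  if Z.eqb a (Z.of_nat n) then (- Z.of_nat n + 1)%Z else (a + 1)%Z.
Definition zpred (n : nat) (a : Z) : Z :=
  if Z.eqb a (- Z.of_nat n + 1)%Z then Z.of_nat n else (a - 1)%Z.

Definition neighbours (n : nat) (w : vtx) : list vtx :=
  let (a, b) := w in
  [(zsucc n a, b); (zpred n a, b); (a, zsucc n b); (a, zpred n b)].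

(* ball n k w : list of all vertices u with graph distance d(w,u) <= k
   (possibly with repetitions). *)
Fixpoint ball (n : nat) (k : nat) (w : vtx) : list vtx :=
  match k with
  | O => [w]
  | S k' => ball n k' w ++ flat_map (neighbours n) (ball n k' w)
  end.

Definition norm1 (w : vtx) : R := IZR (Z.abs (fst w) + Z.abs (snd w)).

Definition sum_vertices (n : nat) (f : vtx -> R) : R :=
  fold_right Rplus 0 (map f (vertices n)).

(* tau'(w,k) = max { tau w - tau u : d(w,u) <= k } (w itself is in the ball,
   so the extra 0 in the fold does not change the maximum). *)
Definition tau' (n : nat) (tau : vtx -> R) (w : vtx) (k : nat) : R :=
  fold_right Rmax 0 (map (fun u => tau w - tau u) (ball n k w)).

Definition L_set (n : nat) (tau : vtx -> R) (eps : R) (k : nat) : Prop :=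
  forall w, in_torus n w -> tau' n tau w k <= eps / 2.

(* "L(tau,eps) >= b", where L(tau,eps) = sup (L_set) - 1 (possibly +infinity):
   every (real) upper bound U of L_set satisfies U - 1 >= b. *)
Definition L_ge (n : nat) (tau : vtx -> R) (eps : R) (b : R) : Prop :=
  forall U : R, (forall k : nat, L_set n tau eps k -> INR k <= U) -> U - 1 >= b.

Definition h (v : vtx) (x : R) : R := ln (1 + x) / sqrt (ln (1 + norm1 v)).

Definition eta (v : vtx) (w : vtx) : R :=
  if Rle_dec (norm1 w) (sqrt (norm1 v)) then 0
  else if Rle_dec (norm1 w) (norm1 v) then h v (norm1 w) - h v (sqrt (norm1 v))
  else h v (norm1 v) - h v (sqrt (norm1 v)).

Definition floorR (x : R) : R := IZR (Int_part x).

(* Main.v *)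
Require Import Defs.
From Stdlib Require Import Reals ZArith List Lra Lia.
Import ListNotations.
Open Scope R_scope.

Lemma ln_le' x y : 0 < x -> x <= y -> ln x <= ln y.
Proof. intros Hx Hxy. destruct (Req_dec x y) as [->|Hne]; [lra|]. left; apply ln_increasing; lra. Qed.

Lemma ln_sub_le x y : 0 < x -> 0 < y -> ln y - ln x <= (y - x) / x.
Proof.
  intros Hx Hy.
  assert (H := exp_ineq1_le ((y-x)/x)).
  assert (ln y <= ln x + (y-x)/x). {
    rewrite <- (ln_exp (ln x + (y-x)/x)).
    apply ln_le'; [lra|]. rewrite exp_plus, exp_ln by lra.
    replace y with (x * (1 + (y-x)/x)) at 1 by (field; lra).
    apply Rmult_le_compat_l; lra. }
  lra.
Qed.

Definition nZ (w : vtx) : Z := (Z.abs (fst w) + Z.abs (snd w))%Z.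

Lemma nb_norm n w u : In u (neighbours n w) -> (nZ u >= nZ w - 1)%Z.
Proof.
  destruct w as [a b]; simpl; intros [H|[H|[H|[H|[]]]]]; subst; unfold nZ, zsucc, zpred; simpl;
  try (match goal with |- context [Z.eqb ?x ?y] => destruct (Z.eqb_spec x y) end); lia.
Qed.

Lemma ball_normZ n K : forall w u, In u (ball n K w) -> (nZ u >= nZ w - Z.of_nat K)%Z.
Proof.
  induction K; simpl; intros w u H.
  - destruct H as [<-|[]]; lia.
  - apply in_app_or in H; destruct H as [H|H].
    + specialize (IHK _ _ H); lia.
    + apply in_flat_map in H as [x [Hx Hu]].
      specialize (IHK _ _ Hx). apply nb_norm in Hu. lia.
Qed.

Lemma ball_norm n K w u : In u (ball n K w) -> norm1 u >= norm1 w - INR K.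
Proof.
  intros H. apply ball_normZ in H. unfold norm1. fold (nZ u). fold (nZ w).
  rewrite INR_IZR_INZ, <- minus_IZR. apply IZR_ge. exact H.
Qed.

Lemma fold_max_le (l : list R) B : 0 <= B -> (forall x, In x l -> x <= B) -> fold_right Rmax 0 l <= B.
Proof.
  induction l; simpl; intros HB H; auto.
  apply Rmax_lub; auto.
Qed.

Lemma fold_max_ge0 (l : list R) : 0 <= fold_right Rmax 0 l.
Proof. induction l; simpl. lra. eapply Rle_trans; [exact IHl|apply Rmax_r]. Qed.

Section V.
Variable v : vtx.
Hypothesis Hm : 1 <= norm1 v.

Definition m := norm1 v.
Definition s := sqrt m.
Definition Lg := ln (1 + m).
Definition clamp t := Rmin (Rmax t s) m.
Definition g t := (ln (1 + clamp t) - ln (1 + s)) / sqrt Lg.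

Lemma s_bounds : 1 <= s <= m.
Proof.
  unfold s. assert (H1 : 1 <= sqrt m).
  { rewrite <- sqrt_1. apply sqrt_le_1_alt. unfold m; lra. }
  split; auto. assert (H := sqrt_sqrt m). unfold m in *. nra.
Qed.

Lemma Lg_pos : 1/2 <= Lg.
Proof.
  unfold Lg. assert (H := ln_sub_le (1 + m) 1). rewrite ln_1 in H.
  assert (Hm' : 1 <= m) by exact Hm.
  assert (H2 : (1 - (1+m)) / (1+m) <= - (1/2)).
  { apply (Rmult_le_reg_r (1+m)); [lra|]. unfold Rdiv. rewrite Rmult_assoc, Rinv_l by lra. lra. }
  specialize (H ltac:(lra) ltac:(lra)). lra.
Qed.

Lemma sqL_pos : 0 < sqrt Lg.
Proof. apply sqrt_lt_R0. pose proof Lg_pos; lra. Qed.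

Lemma clamp_bounds t : s <= clamp t <= m.
Proof. pose proof s_bounds. unfold clamp, Rmin, Rmax; repeat destruct Rle_dec; lra. Qed.

Lemma clamp_mono t1 t2 : t1 <= t2 -> clamp t1 <= clamp t2.
Proof. pose proof s_bounds. unfold clamp, Rmin, Rmax; repeat destruct Rle_dec; lra. Qed.

Lemma clamp_lip t1 t2 : t1 <= t2 -> clamp t2 - clamp t1 <= t2 - t1.
Proof. pose proof s_bounds. unfold clamp, Rmin, Rmax; repeat destruct Rle_dec; lra. Qed.

Lemma eta_g w : eta v w = g (norm1 w).
Proof.
  pose proof s_bounds. unfold eta, g, h.
  destruct Rle_dec as [H1|H1].
  - replace (clamp (norm1 w)) with s by (unfold clamp, Rmin, Rmax, s, m in *; repeat destruct Rle_dec; lra).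
    unfold Lg, s, m, Rdiv; ring.
  - destruct Rle_dec as [H2|H2].
    + replace (clamp (norm1 w)) with (norm1 w) by (unfold clamp, Rmin, Rmax, s, m in *; repeat destruct Rle_dec; lra).
      unfold Lg, s, m, Rdiv; ring.
    + replace (clamp (norm1 w)) with m by (unfold clamp, Rmin, Rmax, s, m in *; repeat destruct Rle_dec; lra).
      unfold Lg, s, m, Rdiv; ring.
Qed.

Lemma g_mono t1 t2 : t1 <= t2 -> g t1 <= g t2.
Proof.
  intros H. pose proof (clamp_bounds t1). pose proof s_bounds. pose proof sqL_pos. unfold g.
  apply Rmult_le_compat_r. left; apply Rinv_0_lt_compat; lra.
  apply Rplus_le_compat_r. apply ln_le'. lra. apply Rplus_le_compat_l, clamp_mono; auto.
Qed.

Definition E r K := ln (1 + clamp r) - ln (1 + clamp (r - K)).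

Lemma E_nonneg r K : 0 <= K -> 0 <= E r K.
Proof.
  intros HK. unfold E. pose proof (clamp_bounds (r-K)). pose proof s_bounds.
  assert (ln (1 + clamp (r - K)) <= ln (1 + clamp r)); [|lra].
  apply ln_le'. lra. apply Rplus_le_compat_l, clamp_mono; lra.
Qed.

Lemma E_mul r K : 0 <= K -> E r K * (1 + clamp (r - K)) <= K.
Proof.
  intros HK. unfold E. pose proof (clamp_bounds (r-K)). pose proof (clamp_bounds r). pose proof s_bounds.
  assert (Hl := ln_sub_le (1 + clamp (r-K)) (1 + clamp r) ltac:(lra) ltac:(lra)).
  assert (H2 := clamp_lip (r-K) r ltac:(lra)).
  apply (Rmult_le_compat_r (1 + clamp (r-K))) in Hl; [|lra].
  unfold Rdiv in Hl. rewrite Rmult_assoc, Rinv_l in Hl by lra. lra.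
Qed.

Lemma E_zero r K : 0 <= K -> (r <= s \/ m <= r - K) -> E r K = 0.
Proof.
  intros HK Hc. pose proof s_bounds. unfold E.
  replace (clamp (r - K)) with (clamp r). ring.
  unfold clamp, Rmin, Rmax; repeat destruct Rle_dec; lra.
Qed.

Lemma clamp_ge r K : 0 <= K -> s < r -> r - K < m -> r - K <= clamp (r - K).
Proof. intros. pose proof s_bounds. unfold clamp, Rmin, Rmax; repeat destruct Rle_dec; lra. Qed.

Lemma eta_diff n K w u : In u (ball n K w) -> eta v w - eta v u <= E (norm1 w) (INR K) / sqrt Lg.
Proof.
  intros H. apply ball_norm in H. rewrite !eta_g.
  assert (g (norm1 w - INR K) <= g (norm1 u)) by (apply g_mono; lra).
  assert (g (norm1 w) - g (norm1 w - INR K) = E (norm1 w) (INR K) / sqrt Lg) by (unfold g, E, Rdiv; ring).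
  lra.
Qed.


Lemma part2_core n K alpha eps w : alpha > 0 -> 0 < eps ->
  INR K <= (1 + s) * (exp (eps * sqrt Lg / (2 * alpha)) - 1) ->
  tau' n (fun w => alpha * eta v w) w K <= eps / 2.
Proof.
  intros Ha He HK. unfold tau'. apply fold_max_le; [lra|].
  intros x Hx. apply in_map_iff in Hx as [u [<- Hu]].
  pose proof (eta_diff n K w u Hu) as Hd.
  set (X := eps * sqrt Lg / (2 * alpha)).
  pose proof s_bounds. pose proof sqL_pos. pose proof (pos_INR K).
  set (r := norm1 w) in *.
  pose proof (clamp_bounds (r - INR K)). pose proof (clamp_bounds r).
  pose proof (clamp_lip (r - INR K) r ltac:(lra)).
  assert (HX : 1 + INR K / (1 + s) <= exp X).
  { apply (Rmult_le_reg_r (1+s)); [lra|].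
    rewrite Rmult_plus_distr_r. unfold Rdiv. rewrite (Rmult_assoc (INR K)), Rinv_l by lra. unfold X. lra. }
  assert (HKs : INR K <= (1 + clamp (r - INR K)) * (INR K / (1 + s))).
  { assert (Hq : 1 <= (1 + clamp (r - INR K)) / (1 + s)).
    { apply (Rmult_le_reg_r (1+s)); [lra|]. unfold Rdiv. rewrite Rmult_assoc, Rinv_l by lra. lra. }
    replace ((1 + clamp (r - INR K)) * (INR K / (1 + s))) with (INR K * ((1 + clamp (r - INR K)) / (1 + s)))
      by (unfold Rdiv; ring).
    rewrite <- (Rmult_1_r (INR K)) at 1. apply Rmult_le_compat_l; lra. }
  assert (Hp : 0 < 1 + INR K / (1 + s)).
  { apply Rplus_lt_le_0_compat; [lra|].
    apply Rmult_le_pos; [lra| left; apply Rinv_0_lt_compat; lra]. }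
  assert (HE : E r (INR K) <= X).
  { unfold E.
    assert (Hl : ln (1 + clamp r) <= ln ((1 + clamp (r - INR K)) * (1 + INR K / (1 + s)))).
    { apply ln_le'; [lra|]. rewrite Rmult_plus_distr_l, Rmult_1_r. lra. }
    rewrite ln_mult in Hl by lra.
    assert (ln (1 + INR K / (1 + s)) <= X).
    { rewrite <- (ln_exp X). apply ln_le'; [lra|exact HX]. }
    lra. }
  assert (E r (INR K) / sqrt Lg <= X / sqrt Lg).
  { apply Rmult_le_compat_r; [left; apply Rinv_0_lt_compat; lra| exact HE]. }
  assert (alpha * (X / sqrt Lg) = eps / 2) by (unfold X; field; lra).
  assert (alpha * (eta v w - eta v u) <= alpha * (X / sqrt Lg)).
  { apply Rmult_le_compat_l; lra. }
  lra.
Qed.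


Definition psi K t := - ln (1 + s + Rmin t (m + K + 2)).
Definition d2 K t := psi K t - 2 * psi K (t + 1) + psi K (t + 2).

Lemma d2_nonneg K t : 0 <= K -> 0 <= t -> 0 <= d2 K t.
Proof.
  intros HK Ht. pose proof s_bounds. unfold d2, psi.
  set (A := 1 + s + Rmin t (m + K + 2)).
  set (B := 1 + s + Rmin (t + 1) (m + K + 2)).
  set (C := 1 + s + Rmin (t + 2) (m + K + 2)).
  assert (HA : 1 <= A) by (unfold A, Rmin; destruct Rle_dec; unfold m in *; lra).
  assert (HAB : A <= B /\ B <= C /\ (B = A + 1 \/ B = C) /\ C <= A + 2).
  { unfold A, B, C, Rmin; repeat destruct Rle_dec; lra. }
  assert (HBC : A * C <= B * B) by (destruct HAB as [? [? [[->| ->] ?]]]; nra).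
  assert (ln (A * C) <= ln (B * B)) by (apply ln_le'; nra).
  rewrite !ln_mult in H0 by lra. lra.
Qed.

Lemma d2_lower K t : 0 <= K -> 0 <= t -> t <= m + K -> 1 <= d2 K t * (2 + s + t) ^ 2.
Proof.
  intros HK Ht Htm. pose proof s_bounds. unfold d2, psi.
  replace (Rmin t (m + K + 2)) with t by (unfold Rmin; destruct Rle_dec; lra).
  replace (Rmin (t + 1) (m + K + 2)) with (t + 1) by (unfold Rmin; destruct Rle_dec; lra).
  replace (Rmin (t + 2) (m + K + 2)) with (t + 2) by (unfold Rmin; destruct Rle_dec; lra).
  set (A := 1 + s + t).
  assert (HA : 1 <= A) by (unfold A; lra).
  assert (Hl := ln_sub_le ((A + 1) * (A + 1)) (A * (A + 2)) ltac:(nra) ltac:(nra)).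
  rewrite !ln_mult in Hl by lra.
  replace (1 + s + (t + 1)) with (A + 1) by (unfold A; ring).
  replace (1 + s + (t + 2)) with (A + 2) by (unfold A; ring).
  replace (2 + s + t) with (A + 1) by (unfold A; ring).
  replace ((A * (A + 2) - (A + 1) * (A + 1)) / ((A + 1) * (A + 1))) with (- / ((A + 1) ^ 2)) in Hl
    by (field; lra).
  assert (Hp : 0 < (A + 1) ^ 2) by nra.
  set (D := - ln A - 2 * - ln (A + 1) + - ln (A + 2)).
  assert (HD : / (A + 1) ^ 2 <= D) by (unfold D; lra).
  apply (Rmult_le_compat_r ((A+1)^2)) in HD; [|lra].
  rewrite Rinv_l in HD by lra. exact HD.
Qed.

Lemma norm1_ge0 w : 0 <= norm1 w.
Proof. unfold norm1. apply IZR_le. lia. Qed.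

Lemma tau_le n K w : 0 <= tau' n (eta v) w K <= E (norm1 w) (INR K) / sqrt Lg.
Proof.
  pose proof sqL_pos. pose proof (E_nonneg (norm1 w) (INR K) (pos_INR K)).
  split. apply fold_max_ge0.
  unfold tau'. apply fold_max_le.
  - apply Rmult_le_pos; [lra| left; apply Rinv_0_lt_compat; lra].
  - intros x Hx. apply in_map_iff in Hx as [u [<- Hu]]. apply (eta_diff n K w u Hu).
Qed.

Lemma tau_sq_le n K w : (tau' n (eta v) w K) ^ 2 <= Lg.
Proof.
  pose proof (tau_le n K w) as [H0 H1]. pose proof sqL_pos. pose proof s_bounds.
  assert (HE : E (norm1 w) (INR K) <= Lg).
  { unfold E, Lg. pose proof (clamp_bounds (norm1 w)). pose proof (clamp_bounds (norm1 w - INR K)).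
    assert (ln (1 + clamp (norm1 w)) <= ln (1 + m)) by (apply ln_le'; lra).
    assert (0 <= ln (1 + clamp (norm1 w - INR K))) by (rewrite <- ln_1; apply ln_le'; lra).
    lra. }
  assert (Hs : sqrt Lg * sqrt Lg = Lg) by (apply sqrt_sqrt; pose proof Lg_pos; lra).
  assert (tau' n (eta v) w K * sqrt Lg <= Lg).
  { apply (Rmult_le_compat_r (sqrt Lg)) in H1; [|lra].
    unfold Rdiv in H1. rewrite Rmult_assoc, Rinv_l in H1 by lra. lra. }
  assert (tau' n (eta v) w K <= sqrt Lg).
  { apply (Rmult_le_reg_r (sqrt Lg)); [lra|]. lra. }
  simpl. rewrite Rmult_1_r. rewrite <- Hs. apply Rmult_le_compat; lra.
Qed.

Lemma vert_bound n K w : (1 <= K)%nat ->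
  (tau' n (eta v) w K) ^ 2 <= 16 * INR K ^ 4 / Lg * d2 (INR K) (norm1 w).
Proof.
  intros HK1. pose proof (tau_le n K w) as [T0 T1].
  pose proof sqL_pos. pose proof s_bounds. pose proof Lg_pos.
  assert (HK : 1 <= INR K) by (apply (le_INR 1); exact HK1).
  set (r := norm1 w) in *. assert (Hr : 0 <= r) by apply norm1_ge0.
  set (T := tau' n (eta v) w K) in *.
  assert (Hd0 : 0 <= d2 (INR K) r) by (apply d2_nonneg; lra).
  assert (HR : 0 <= 16 * INR K ^ 4 / Lg * d2 (INR K) r).
  { apply Rmult_le_pos; [|lra]. apply Rmult_le_pos; [|left; apply Rinv_0_lt_compat; lra].
    apply Rmult_le_pos; [lra|apply pow_le; lra]. }
  destruct (Rle_dec r s) as [Hc|Hc]; [|destruct (Rle_dec m (r - INR K)) as [Hc2|Hc2]].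
  1,2: rewrite E_zero in T1 by lra; unfold Rdiv in T1; rewrite Rmult_0_l in T1;
       replace T with 0 by lra; simpl; lra.
  set (e := E r (INR K)) in *.
  pose proof (E_nonneg r (INR K) ltac:(lra)) as He0. fold e in He0.
  pose proof (E_mul r (INR K) ltac:(lra)) as Hem. fold e in Hem.
  pose proof (clamp_ge r (INR K) ltac:(lra) ltac:(lra) ltac:(lra)) as Hy.
  pose proof (clamp_bounds (r - INR K)) as Hy2.
  set (y := clamp (r - INR K)) in *.
  assert (HE1 : e * (1 + r) <= 2 * INR K ^ 2).
  { destruct (Rle_dec (1 + r) (2 * INR K)).
    - assert (e <= INR K) by nra. nra.
    - assert (1 + r <= 2 * (1 + y)) by lra. nra. }
  assert (Hd := d2_lower (INR K) r ltac:(lra) Hr ltac:(lra)).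
  assert (Hs : sqrt Lg * sqrt Lg = Lg) by (apply sqrt_sqrt; lra).
  assert (HTs : T * sqrt Lg <= e).
  { apply (Rmult_le_compat_r (sqrt Lg)) in T1; [|lra].
    unfold Rdiv in T1. rewrite Rmult_assoc, Rinv_l in T1 by lra. lra. }
  assert (HT2 : T ^ 2 * Lg <= e ^ 2).
  { rewrite <- Hs. replace (T ^ 2 * (sqrt Lg * sqrt Lg)) with ((T * sqrt Lg) ^ 2) by ring.
    apply pow_incr. split; [apply Rmult_le_pos; lra| exact HTs]. }
  assert (He2 : e ^ 2 * (1 + r) ^ 2 <= 4 * INR K ^ 4).
  { replace (e ^ 2 * (1 + r) ^ 2) with ((e * (1 + r)) ^ 2) by ring.
    replace (4 * INR K ^ 4) with ((2 * INR K ^ 2) ^ 2) by ring.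
    apply pow_incr. split; [apply Rmult_le_pos; lra| exact HE1]. }
  assert (H4 : 4 * INR K ^ 4 <= 16 * INR K ^ 4 * d2 (INR K) r * (1 + r) ^ 2).
  { assert ((2 + s + r) ^ 2 <= 4 * (1 + r) ^ 2).
    { replace (4 * (1 + r) ^ 2) with ((2 * (1 + r)) ^ 2) by ring. apply pow_incr; lra. }
    assert (0 <= INR K ^ 4) by (apply pow_le; lra).
    assert (1 <= d2 (INR K) r * (4 * (1 + r) ^ 2)).
    { eapply Rle_trans; [exact Hd|]. apply Rmult_le_compat_l; lra. }
    nra. }
  assert (Hfin : T ^ 2 * Lg <= 16 * INR K ^ 4 * d2 (INR K) r).
  { apply (Rmult_le_reg_r ((1 + r) ^ 2)). nra.
    assert (0 <= (1 + r) ^ 2) by nra. nra. }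
  replace (16 * INR K ^ 4 / Lg * d2 (INR K) r) with ((16 * INR K ^ 4 * d2 (INR K) r) / Lg)
    by (field; lra).
  apply (Rmult_le_reg_r Lg); [lra|]. unfold Rdiv. rewrite Rmult_assoc, Rinv_l by lra. lra.
Qed.

End V.

Lemma norm_ge1 v : v <> (0%Z, 0%Z) -> 1 <= norm1 v.
Proof.
  intros Hv. unfold norm1. apply IZR_le. destruct v as [a b]; simpl.
  destruct (Z.eq_dec a 0); destruct (Z.eq_dec b 0); subst; try lia. congruence.
Qed.

Lemma part2 n v alpha eps : v <> (0%Z, 0%Z) -> alpha > 0 -> 0 < eps ->
  L_ge n (fun w => alpha * eta v w) eps
         (floorR ((1 + sqrt (norm1 v)) *
                  (exp (eps * sqrt (ln (1 + norm1 v)) / (2 * alpha)) - 1)) - 1).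
Proof.
  intros Hv Ha He. pose proof (norm_ge1 v Hv) as Hm.
  pose proof (s_bounds v Hm) as Hs. pose proof (sqL_pos v Hm) as HL.
  unfold s, m, Lg in *.
  set (X := (1 + sqrt (norm1 v)) * (exp (eps * sqrt (ln (1 + norm1 v)) / (2 * alpha)) - 1)).
  assert (HX : 0 < X).
  { unfold X. apply Rmult_lt_0_compat; [lra|].
    assert (exp 0 < exp (eps * sqrt (ln (1 + norm1 v)) / (2 * alpha))).
    { apply exp_increasing. unfold Rdiv. apply Rmult_lt_0_compat. apply Rmult_lt_0_compat; assumption. apply Rinv_0_lt_compat; lra. }
    rewrite exp_0 in H. lra. }
  destruct (base_Int_part X) as [H1 H2].
  assert (Hz : (0 <= Int_part X)%Z). { apply le_IZR. assert (-1 < IZR (Int_part X)) by lra.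
    apply lt_IZR in H. simpl in H. apply IZR_le. lia. }
  intros U HU. unfold floorR.
  assert (HK : INR (Z.to_nat (Int_part X)) = IZR (Int_part X)).
  { rewrite INR_IZR_INZ, Z2Nat.id by lia. reflexivity. }
  assert (INR (Z.to_nat (Int_part X)) <= U); [|lra].
  apply HU. intros w _. apply (part2_core v Hm); auto. unfold s, m, Lg. rewrite HK. exact H1.
Qed.

Definition lsum (l : list R) := fold_right Rplus 0 l.

Lemma lsum_le {A} (l : list A) f g : (forall x, In x l -> f x <= g x) ->
  lsum (map f l) <= lsum (map g l).
Proof.
  induction l; simpl; intros H. lra.
  apply Rplus_le_compat; auto.
Qed.

Lemma lsum_scal {A} (l : list A) c f : lsum (map (fun x => c * f x) l) = c * lsum (map f l).
Proof. induction l; simpl. ring. unfold lsum in *; rewrite IHl. ring. Qed.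

Lemma lsum_app l1 l2 : lsum (l1 ++ l2) = lsum l1 + lsum l2.
Proof. induction l1; simpl. ring. unfold lsum in *; rewrite IHl1. ring. Qed.

Lemma lsum_prod (f : Z * Z -> R) l1 l2 :
  lsum (map f (list_prod l1 l2)) = lsum (map (fun a => lsum (map (fun b => f (a, b)) l2)) l1).
Proof.
  induction l1; simpl. reflexivity.
  rewrite map_app, lsum_app, map_map. unfold lsum at 3. simpl. rewrite <- IHl1. reflexivity.
Qed.

Lemma zrange_S n : zrange (S n) = (- Z.of_nat n)%Z :: zrange n ++ [(Z.of_nat n + 1)%Z].
Proof.
  unfold zrange. replace (2 * S n)%nat with (S (S (2 * n))) by lia.
  rewrite seq_S. change (seq 0 (S (2*n))) with (0%nat :: seq 1 (2*n)). rewrite <- seq_shift.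
  rewrite map_app. cbn [map app]. rewrite map_map. f_equal; [lia|]. f_equal; [apply map_ext; intros; lia|].
  f_equal. lia.
Qed.

Lemma zsum (F : nat -> R) n : (forall i, 0 <= F i) ->
  lsum (map (fun a => F (Z.abs_nat a)) (zrange n)) <= 2 * sum_f_R0 F n.
Proof.
  intros HF.
  assert (forall n, lsum (map (fun a => F (Z.abs_nat a)) (zrange n)) + F n <= 2 * sum_f_R0 F n);
    [|specialize (H n); specialize (HF n); lra].
  clear n. induction n.
  - simpl. specialize (HF 0%nat); lra.
  - rewrite zrange_S. simpl map. rewrite map_app. simpl lsum. unfold lsum in *. simpl fold_right.
    rewrite fold_right_app. simpl fold_right.
    assert (forall l c, fold_right Rplus c l = fold_right Rplus 0 l + c).
    { induction l; simpl; intros; [ring| rewrite IHl; ring]. }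
    rewrite H. simpl sum_f_R0.
    replace (Z.abs_nat (- Z.of_nat n)) with n by lia.
    replace (Z.abs_nat (Z.of_nat n + 1)) with (S n) by lia. lra.
Qed.

Lemma vsum (G : nat -> R) n : (forall t, 0 <= G t) ->
  sum_vertices n (fun w => G (Z.abs_nat (fst w) + Z.abs_nat (snd w))%nat) <=
  4 * sum_f_R0 (fun i => sum_f_R0 (fun l => G (i + l)%nat) n) n.
Proof.
  intros HG. unfold sum_vertices, vertices. fold (lsum (map (fun w => G (Z.abs_nat (fst w) + Z.abs_nat (snd w))%nat)
    (list_prod (zrange n) (zrange n)))).
  rewrite lsum_prod. simpl.
  eapply Rle_trans.
  - apply (lsum_le _ _ (fun a => 2 * sum_f_R0 (fun l => G (Z.abs_nat a + l)%nat) n)).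
    intros a _. apply (zsum (fun t => G (Z.abs_nat a + t)%nat)). auto.
  - rewrite lsum_scal.
    assert (H := zsum (fun i => sum_f_R0 (fun l => G (i + l)%nat) n) n).
    assert (0 <= 2) by lra.
    assert (lsum (map (fun a => sum_f_R0 (fun l => G (Z.abs_nat a + l)%nat) n) (zrange n))
       <= 2 * sum_f_R0 (fun i => sum_f_R0 (fun l => G (i + l)%nat) n) n).
    { apply H. intros i. apply cond_pos_sum. auto. }
    lra.
Qed.

Lemma tele (f : nat -> R) N : sum_f_R0 (fun k => f k - f (S k)) N = f 0%nat - f (S N).
Proof. induction N; simpl. ring. rewrite IHN. ring. Qed.

Lemma dsum (P : nat -> R) N :
  sum_f_R0 (fun i => sum_f_R0 (fun l => P (i + l)%nat - 2 * P (S (i + l)) + P (S (S (i + l)))) N) N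
  = P 0%nat - 2 * P (S N) + P (S N + S N)%nat.
Proof.
  rewrite (sum_eq _ (fun i => (P i - P (S i)) - (P (i + S N)%nat - P (S (i + S N))))).
  - rewrite minus_sum. rewrite tele.
    rewrite (sum_eq _ (fun i => (fun j => P (j + S N)%nat) i - (fun j => P (j + S N)%nat) (S i))).
    + rewrite tele. simpl. replace (S (N + S N)) with (S N + S N)%nat by lia. ring.
    + intros i _. simpl. reflexivity.
  - intros i _.
    rewrite (sum_eq _ (fun l => (fun j => P (i + j)%nat - P (S (i + j))) l - (fun j => P (i + j)%nat - P (S (i + j))) (S l))).
    + rewrite tele. replace (i + 0)%nat with i by lia. replace (i + S N)%nat with (S (i + N)) by lia. reflexivity.
    + intros l _. simpl. replace (i + S l)%nat with (S (i + l)) by lia. ring.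
Qed.

Lemma psi_facts v K t : 1 <= norm1 v -> 0 <= K -> 0 <= t ->
  - ln (1 + s v + (m v + K + 2)) <= psi v K t /\ psi v K t <= 0.
Proof.
  intros Hm HK Ht. pose proof (s_bounds v Hm). unfold psi. unfold m in *.
  assert (0 <= Rmin t (norm1 v + K + 2)) by (unfold Rmin; destruct Rle_dec; lra).
  assert (Rmin t (norm1 v + K + 2) <= norm1 v + K + 2) by apply Rmin_r.
  split.
  - apply Ropp_le_contravar, ln_le'; lra.
  - assert (0 <= ln (1 + s v + Rmin t (norm1 v + K + 2))) by (rewrite <- ln_1; apply ln_le'; lra). lra.
Qed.

Lemma psi_mono v K t1 t2 : 1 <= norm1 v -> 0 <= K -> 0 <= t1 -> t1 <= t2 -> psi v K t2 <= psi v K t1.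
Proof.
  intros Hm HK Ht Ht2. pose proof (s_bounds v Hm). unfold psi. unfold m in *.
  assert (0 <= Rmin t1 (norm1 v + K + 2)) by (unfold Rmin; destruct Rle_dec; lra).
  assert (Rmin t1 (norm1 v + K + 2) <= Rmin t2 (norm1 v + K + 2)) by (unfold Rmin; repeat destruct Rle_dec; lra).
  apply Ropp_le_contravar, ln_le'; lra.
Qed.

Lemma psi0 v K : 1 <= norm1 v -> 0 <= K -> psi v K 0 = - ln (1 + s v).
Proof.
  intros Hm HK. unfold psi, m. replace (Rmin 0 (norm1 v + K + 2)) with 0 by (unfold Rmin; destruct Rle_dec; lra).
  f_equal. f_equal. ring.
Qed.

Lemma ln_le_sub1 x : 0 < x -> ln x <= x - 1.
Proof. intros. pose proof (ln_sub_le 1 x ltac:(lra) H). rewrite ln_1 in H0. lra. Qed.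

Lemma vsumK v n K : 1 <= norm1 v -> (1 <= K)%nat ->
  sum_vertices n (fun w => (tau' n (eta v) w K) ^ 2) <= 448 * INR K ^ 5.
Proof.
  intros Hm HK1.
  assert (HK : 1 <= INR K) by (apply (le_INR 1); exact HK1).
  pose proof (Lg_pos v Hm) as HL. pose proof (s_bounds v Hm) as Hs.
  set (c := 16 * INR K ^ 4 / Lg v).
  assert (Hc : 0 <= c).
  { unfold c. apply Rmult_le_pos; [|left; apply Rinv_0_lt_compat; lra].
    apply Rmult_le_pos; [lra|apply pow_le; lra]. }
  set (G := fun t : nat => d2 v (INR K) (INR t)).
  assert (HG : forall t, 0 <= G t) by (intros; apply d2_nonneg; [exact Hm|lra|apply pos_INR]).
  assert (step1 : sum_vertices n (fun w => (tau' n (eta v) w K) ^ 2)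
     <= c * sum_vertices n (fun w => G (Z.abs_nat (fst w) + Z.abs_nat (snd w))%nat)).
  { unfold sum_vertices. fold (lsum (map (fun w => (tau' n (eta v) w K) ^ 2) (vertices n))).
    fold (lsum (map (fun w => G (Z.abs_nat (fst w) + Z.abs_nat (snd w))%nat) (vertices n))).
    rewrite <- lsum_scal. apply lsum_le. intros w _.
    replace (G (Z.abs_nat (fst w) + Z.abs_nat (snd w))%nat) with (d2 v (INR K) (norm1 w)).
    - apply vert_bound; auto.
    - unfold G. f_equal. unfold norm1. rewrite INR_IZR_INZ. f_equal. lia. }
  assert (step2 := vsum G n HG).
  set (P := fun t : nat => psi v (INR K) (INR t)).
  assert (step3 : sum_f_R0 (fun i => sum_f_R0 (fun l => G (i + l)%nat) n) n
     = P 0%nat - 2 * P (S n) + P (S n + S n)%nat).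
  { rewrite <- dsum. apply sum_eq. intros i _. apply sum_eq. intros l _.
    unfold G, P, d2. rewrite !S_INR. f_equal. f_equal. ring. }
  destruct (psi_facts v (INR K) (INR (S n)) Hm ltac:(lra) (pos_INR _)) as [Hp1 Hp2].
  assert (Hp3 : P (S n + S n)%nat <= P (S n)).
  { apply psi_mono; auto. lra. apply pos_INR. apply le_INR. lia. }
  assert (Hp0 : P 0%nat = - ln (1 + s v)) by (apply psi0; auto; lra).
  assert (Hl0 : 0 <= ln (1 + s v)) by (rewrite <- ln_1; apply ln_le'; lra).
  assert (Hln : ln (1 + s v + (m v + INR K + 2)) <= Lg v + (2 + INR K)).
  { unfold Lg.
    assert (ln (1 + s v + (m v + INR K + 2)) <= ln ((1 + m v) * (3 + INR K))).
    { apply ln_le'; unfold m in *; nra. }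
    rewrite ln_mult in H by (unfold m in *; lra).
    pose proof (ln_le_sub1 (3 + INR K) ltac:(lra)). lra. }
  assert (Hsum : sum_vertices n (fun w => G (Z.abs_nat (fst w) + Z.abs_nat (snd w))%nat)
     <= 4 * (Lg v + (2 + INR K))).
  { rewrite step3 in step2. unfold P in *. fold (P (S n)) in *. lra. }
  eapply Rle_trans; [exact step1|].
  eapply Rle_trans; [apply Rmult_le_compat_l; [exact Hc| exact Hsum]|].
  unfold c.
  replace (16 * INR K ^ 4 / Lg v * (4 * (Lg v + (2 + INR K))))
    with (64 * INR K ^ 4 + 64 * INR K ^ 4 * (2 + INR K) / Lg v) by (field; lra).
  assert (H1 : (2 + INR K) / Lg v <= 2 * (2 + INR K)).
  { apply (Rmult_le_reg_r (Lg v)); [lra|]. unfold Rdiv. rewrite Rmult_assoc, Rinv_l by lra. nra. }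
  assert (H4 : 0 <= INR K ^ 4) by (apply pow_le; lra).
  replace (64 * INR K ^ 4 * (2 + INR K) / Lg v) with (64 * INR K ^ 4 * ((2 + INR K) / Lg v)) by (field; lra).
  assert (64 * INR K ^ 4 * ((2 + INR K) / Lg v) <= 64 * INR K ^ 4 * (2 * (2 + INR K)))
    by (apply Rmult_le_compat_l; nra).
  assert (64 * INR K ^ 4 * (5 + 2 * INR K) <= 448 * INR K ^ 5).
  { replace (448 * INR K ^ 5) with (64 * INR K ^ 4 * (7 * INR K)) by ring. apply Rmult_le_compat_l; lra. }
  lra.
Qed.

Lemma bern k : 1 + INR k / 8 <= (9/8) ^ k.
Proof.
  induction k. simpl; lra.
  rewrite S_INR. simpl. pose proof (pos_INR k). lra.
Qed.

Definition q := / 2 * (9/8) ^ 5.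

Lemma q_bounds : 0 <= q /\ / (1 - q) <= 11.
Proof.
  unfold q. simpl. split. lra.
  apply (Rmult_le_reg_r (1 - / 2 * (9 / 8 * (9 / 8 * (9 / 8 * (9 / 8 * (9 / 8 * 1))))))). lra.
  rewrite Rinv_l by lra. lra.
Qed.

Lemma polybound k : (/ 2) ^ k * (448 * INR (S k) ^ 5) <= 448 * 8 ^ 5 * q ^ k.
Proof.
  assert (H1 : INR (S k) <= 8 * (9/8) ^ k) by (pose proof (bern k); rewrite S_INR; lra).
  assert (H2 : INR (S k) ^ 5 <= 8 ^ 5 * ((9/8) ^ 5) ^ k).
  { rewrite <- pow_mult, Nat.mul_comm, pow_mult, <- Rpow_mult_distr.
    apply pow_incr. split; [apply pos_INR|exact H1]. }
  unfold q. rewrite Rpow_mult_distr.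
  assert (0 <= (/2) ^ k) by (apply pow_le; lra).
  replace (448 * 8 ^ 5 * ((/ 2) ^ k * ((9 / 8) ^ 5) ^ k)) with ((/ 2) ^ k * (448 * (8 ^ 5 * ((9/8) ^ 5) ^ k))) by ring.
  apply Rmult_le_compat_l; [auto|]. lra.
Qed.

Lemma geo x N : 0 <= x < 1 -> sum_f_R0 (fun k => x ^ k) N <= / (1 - x).
Proof.
  intros Hx. rewrite tech3 by lra.
  assert (0 <= x ^ S N) by (apply pow_le; lra).
  unfold Rdiv. rewrite <- (Rmult_1_l (/ (1 - x))) at 2. apply Rmult_le_compat_r; [left; apply Rinv_0_lt_compat; lra|lra].
Qed.

Lemma lsum_swap {A} (l : list A) (T : A -> nat -> R) N :
  lsum (map (fun w => sum_f_R0 (T w) N) l) = sum_f_R0 (fun k => lsum (map (fun w => T w k) l)) N.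
Proof.
  induction l; simpl.
  - rewrite sum_cte. ring.
  - unfold lsum in *. rewrite IHl. rewrite <- sum_plus. reflexivity.
Qed.

Lemma lsum_cv {A} (l : list A) (P : A -> nat -> R) (S : A -> R) :
  (forall w, Un_cv (P w) (S w)) ->
  Un_cv (fun N => lsum (map (fun w => P w N) l)) (lsum (map S l)).
Proof.
  intros H. induction l; simpl.
  - intros eps He. exists 0%nat. intros. unfold Rdist. rewrite Rminus_0_r, Rabs_R0. lra.
  - apply CV_plus; auto.
Qed.

Lemma cv_le u l C : Un_cv u l -> (forall N, u N <= C) -> l <= C.
Proof.
  intros Hu HC. destruct (Rle_dec l C) as [|Hn]; auto.
  destruct (Hu (l - C)) as [N HN]. lra.
  specialize (HN N (Nat.le_refl N)). unfold Rdist in HN. apply Rabs_def2 in HN.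
  specialize (HC N). lra.
Qed.

Definition Cst := 448 * 8 ^ 5 * 11.

Lemma part1 n v : v <> (0%Z, 0%Z) ->
  exists S : vtx -> R,
    (forall w, in_torus n w ->
       infinite_sum (fun k => (/ 2) ^ k * (tau' n (eta v) w (Datatypes.S k)) ^ 2) (S w)) /\
    sum_vertices n S <= Cst.
Proof.
  intros Hv. pose proof (norm_ge1 v Hv) as Hm. pose proof (Lg_pos v Hm) as HL.
  set (term := fun w k => (/ 2) ^ k * (tau' n (eta v) w (Datatypes.S k)) ^ 2).
  assert (Ht0 : forall w k, 0 <= term w k).
  { intros. unfold term. apply Rmult_le_pos; apply pow_le. lra. apply (tau_le v Hm). }
  assert (conv : forall w, {l | Un_cv (sum_f_R0 (term w)) l}).
  { intros w. apply growing_cv.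
    - intros N. simpl. specialize (Ht0 w (Datatypes.S N)). lra.
    - exists (Lg v * 2). intros x [i ->].
      eapply Rle_trans.
      + apply (sum_Rle _ (fun k => (/2) ^ k * Lg v)). intros k _. unfold term.
        apply Rmult_le_compat_l. apply pow_le; lra. apply tau_sq_le; auto.
      + rewrite <- scal_sum. apply Rmult_le_compat_l; [lra|].
        assert (H := geo (/2) i ltac:(lra)). replace (/ (1 - / 2)) with 2 in H by field. exact H. }
  exists (fun w => proj1_sig (conv w)). split.
  - intros w _. exact (proj2_sig (conv w)).
  - unfold sum_vertices. fold (lsum (map (fun w => proj1_sig (conv w)) (vertices n))).
    apply (cv_le _ _ _ (lsum_cv (vertices n) (fun w => sum_f_R0 (term w)) _ (fun w => proj2_sig (conv w)))).
    intros N. rewrite lsum_swap.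
    eapply Rle_trans.
    + apply (sum_Rle _ (fun k => 448 * 8 ^ 5 * q ^ k)). intros k _.
      unfold term. rewrite lsum_scal.
      eapply Rle_trans; [|apply polybound].
      apply Rmult_le_compat_l. apply pow_le; lra.
      apply vsumK; auto. lia.
    + replace (sum_f_R0 (fun k => 448 * 8 ^ 5 * q ^ k) N) with (448 * 8 ^ 5 * sum_f_R0 (fun k => q ^ k) N) by (rewrite scal_sum; apply sum_eq; intros; ring). unfold Cst. destruct q_bounds.
      assert (H1 := geo q N ltac:(unfold q in *; simpl in *; lra)).
      apply Rmult_le_compat_l; lra.
Qed.

Theorem lemma4p5 :
  (exists C : R, C > 0 /\
     forall (n : nat) (v : vtx), (2 <= n)%nat -> in_torus n v -> v <> (0%Z, 0%Z) ->
       exists S : vtx -> R,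
         (forall w, in_torus n w ->
            infinite_sum (fun k => (/ 2) ^ k * (tau' n (eta v) w (Datatypes.S k)) ^ 2) (S w)) /\
         sum_vertices n S <= C)
  /\
  (forall (n : nat) (v : vtx), (2 <= n)%nat -> in_torus n v -> v <> (0%Z, 0%Z) ->
     forall alpha eps : R, alpha > 0 -> 0 < eps <= / 2 ->
       L_ge n (fun w => alpha * eta v w) eps
         (floorR ((1 + sqrt (norm1 v)) *
                  (exp (eps * sqrt (ln (1 + norm1 v)) / (2 * alpha)) - 1)) - 1)).
Proof.
  split.
  - exists Cst. split. unfold Cst; simpl; lra.
    intros n v _ _ Hv. apply part1; auto.
  - intros n v _ _ Hv alpha eps Ha He. apply part2; auto. lra.
Qed.
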